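(* Let $D$ be a finite-dimensional central division algebra over a field $F$ of characteristic $0$ with involution $\ast$, and let $K$ be a maximal subfield of $D$ with $K^\ast\subseteq K$. Then there exists a map $f\colon D\to K$ such that $f(1)=1$, $f(z^\ast)=f(z)^\ast$ for all $z\in D$, and $f(kzl)=kf(z)l$ for all $k,l\in K$ and $z\in D$ (in particular $f$ is additive).
   Context: A maximal subfield is a subfield equal to its own centralizer in $D$. An involution is an additive anti-automorphism of order at most $2$. *)

(* Defs.v *)
From HB Require Import structures.
From mathcomp Require Import all_boot all_order all_algebra all_field.
Set Implicit Arguments. Unset Strict Implicit. Unset Printing Implicit Defensive.
Import GRing.Theory.
Local Open Scope ring_scope.

Definition is_division_alg (F : fieldType) (D : falgType F) : Prop :=
  forall x : D, x != 0 -> x \is a GRing.unit.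

Definition is_central_alg (F : fieldType) (D : falgType F) : Prop :=
  ('Z(fullv : {vspace D}))%VS = 1%VS.

(* An involution: an additive anti-automorphism of order at most 2
   (not required to be F-linear). *)
Definition is_involution (F : fieldType) (D : falgType F) (s : D -> D) : Prop :=
  [/\ forall x y, s (x + y) = s x + s y,
      forall x y, s (x * y) = s y * s x &
      forall x, s (s x) = x].

Definition is_maximal_subfield (F : fieldType) (D : falgType F)
    (K : {aspace D}) : Prop :=
  (forall x : D, x \in K -> x != 0 -> x^-1 \in K) /\
  ('C(K : {vspace D}))%VS = (K : {vspace D}).

(* Main.v *)
Require Import Defs.
From HB Require Import structures.
From mathcomp Require Import all_boot all_order all_algebra all_field.
From Stdlib Require Import ClassicalEpsilon.
Import GRing.Theory.
Local Open Scope ring_scope.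

Section S.
Variables (F : fieldType) (D : falgType F).
Local Notation e := (vbasis (fullv : {vspace D})).
Definition Tr (x : D) : F := \tr (passmx.mxof e e (amulr x)).
Lemma amulrM (x y : D) : amulr (x * y) = (amulr y \o amulr x)%VF.
Proof. apply/lfunP => w; rewrite comp_lfunE /amulr. by rewrite !lfunE /= mulrA. Qed.
Lemma TrM x y : Tr (x * y) = Tr (y * x).
Proof.
rewrite /Tr !amulrM !(@passmx.mxof_comp _ _ _ _ e e e (vbasisP _)); exact: mxtrace_mulC.
Qed.
Lemma mxofD (f g : 'End(D)) : passmx.mxof e e (f + g) = passmx.mxof e e f + passmx.mxof e e g.
Proof. by have := passmx.mxof_linear e e 1 f g; rewrite !scale1r. Qed.
Lemma mxof0 : passmx.mxof e e (0 : 'End(D)) = 0.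
Proof. have h := mxofD 0 0; rewrite addr0 in h; apply: (addrI (passmx.mxof e e 0)); by rewrite addr0 -h. Qed.
Lemma mxofZ c (f : 'End(D)) : passmx.mxof e e (c *: f) = c *: passmx.mxof e e f.
Proof. by have := passmx.mxof_linear e e c f 0; rewrite !addr0 mxof0 addr0. Qed.
Lemma TrD x y : Tr (x + y) = Tr x + Tr y.
Proof. by rewrite /Tr linearD /= mxofD mxtraceD. Qed.
Lemma TrZ (c : F) x : Tr (c *: x) = c * Tr x.
Proof. by rewrite /Tr linearZ /= mxofZ mxtraceZ. Qed.
Lemma Tr1 : Tr 1 = (\dim (fullv : {vspace D}))%:R.
Proof.
rewrite /Tr; have -> : amulr (1 : D) = \1%VF by apply/lfunP => w; rewrite id_lfunE !lfunE /= mulr1.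
by rewrite passmx.mxof1 ?mxtrace1 // (basis_free (vbasisP _)).
Qed.

Lemma Tr0 : Tr 0 = 0.
Proof. by rewrite -(scale0r (0 : D)) TrZ mul0r. Qed.
Lemma TrB x y : Tr (x - y) = Tr x - Tr y.
Proof. by rewrite TrD -scaleN1r TrZ mulN1r. Qed.
Lemma Tr_sum (I : Type) (r : seq I) (P : pred I) (G : I -> D) :
  Tr (\sum_(i <- r | P i) G i) = \sum_(i <- r | P i) Tr (G i).
Proof. exact: (big_morph Tr TrD Tr0). Qed.
End S.
Arguments Tr {F D}.
Arguments TrM {F D}.

Section Main.
Variables (F : fieldType) (D : falgType F) (K : {aspace D}).
Local Notation b := (vbasis (K : {vspace D})).
Local Notation m := (\dim (K : {vspace D})).
Definition gK (a : D) : D := \sum_(i < m) Tr (a * b`_i) *: b`_i.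
Lemma gK_lin : linear gK.
Proof.
move=> c x y; rewrite /gK scaler_sumr -big_split /=; apply: eq_bigr => i _.
by rewrite mulrDl -scalerAl TrD TrZ scalerDl scalerA.
Qed.
HB.instance Definition _ := GRing.isSemilinear.Build F D D _ gK
  (GRing.semilinear_linear gK_lin).

Hypothesis hinv : forall x : D, x \in K -> x != 0 -> x^-1 \in K.
Hypothesis hunit : forall x : D, x != 0 -> x \is a GRing.unit.
Hypothesis hT1 : Tr (1 : D) != 0.

Lemma bK (i : 'I_m) : b`_i \in K.
Proof. by apply: vbasis_mem; apply: mem_nth; rewrite size_tuple. Qed.

Lemma Texp v : (forall i : 'I_m, Tr (v * b`_i) = 0) ->
  forall k, k \in K -> Tr (v * k) = 0.
Proof.
move=> H k /coord_vbasis ->; rewrite mulr_sumr Tr_sum big1 // => i _.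
by rewrite -scalerAr TrZ H mulr0.
Qed.

Lemma Tunique a a' : a \in K -> a' \in K ->
  (forall k, k \in K -> Tr (a * k) = Tr (a' * k)) -> a = a'.
Proof.
move=> Ha Ha' H; apply/eqP; rewrite -subr_eq0; apply/negPn/negP => nz.
have Hv : a - a' \in K by rewrite rpredB.
have := H _ (hinv _ Hv nz); move/eqP; rewrite -subr_eq0 -TrB -mulrBl.
by rewrite mulrV ?hunit // (negPf hT1).
Qed.

Lemma Texists z : exists2 a, a \in K &
  forall k, k \in K -> Tr (a * k) = Tr (z * k).
Proof.
pose h : 'End(D) := linfun gK.
have gK0 v : gK v = 0 -> forall i : 'I_m, Tr (v * b`_i) = 0.
  move=> hv; have := basis_free (vbasisP (K : {vspace D})).
  by move/freeP => /(_ (fun i => Tr (v * b`_i))); apply.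
have inK v : gK v \in K.
  by apply: rpred_sum => i _; apply: rpredZ; apply: bK.
have ker : (K :&: lker h)%VS = 0%VS.
  apply/eqP; rewrite -subv0; apply/subvP => v.
  rewrite memv_cap memv_ker lfunE /= memv0 => /andP[vK /eqP hv].
  apply/eqP; apply: Tunique => // [|k kK]; first exact: rpred0.
  by rewrite mul0r Tr0; apply: Texp => //; apply: gK0.
have sub : (h @: K <= K)%VS.
  by apply/subvP => v /memv_imgP [u _ ->]; rewrite lfunE.
have imK : (h @: K)%VS = K :> {vspace D}.
  apply/eqP; case: (dimv_leqif_eq sub) => _ <-.
  by rewrite limg_dim_eq.
have : h z \in (h @: K)%VS by rewrite imK lfunE.
case/memv_imgP => a aK hza; exists a => // k kK.
rewrite !lfunE /= in hza.
have : gK (a - z) = 0 by rewrite linearB /= hza subrr.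
move/gK0/Texp => /(_ k kK); move/eqP; rewrite mulrBl TrB subr_eq0.
by move/eqP.
Qed.
End Main.

Theorem proposition2p3 (F : fieldType) (D : falgType F) (s : D -> D)
    (K : {aspace D}) :
  [pchar F] =i pred0 ->
  is_division_alg D ->
  is_central_alg D ->
  is_involution s ->
  is_maximal_subfield K ->
  (forall k : D, k \in K -> s k \in K) ->
  exists f : D -> D,
    [/\ forall z, f z \in K,
        f 1 = 1,
        forall z, f (s z) = s (f z),
        forall k l z, k \in K -> l \in K -> f (k * z * l) = k * f z * l &
        forall x y, f (x + y) = f x + f y].
Proof.
move=> hchar hdiv _ [sD sM ss] [hinv hC] sK.
have hT1 : Tr (1 : D) != 0.
  rewrite Tr1 (pcharf0P F).1 // dimv_eq0; apply/negP => /eqP h0.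
  have : (1 : D) \in (fullv : {vspace D}) by rewrite memvf.
  by rewrite h0 memv0 oner_eq0.
have s0 : s 0 = 0.
  by apply: (addrI (s 0)); rewrite addr0 -sD addr0.
have s1 : s 1 = 1.
  have := sM (s 1) 1; rewrite !mulr1 !ss => h; rewrite mulr1 in h; by rewrite -h.
have K1 : (1 : D) \in K by rewrite -hC centv1.
pose two : D := 1 + 1.
have two_nz : two != 0.
  rewrite /two -mulr2n -scaler_nat scaler_eq0 oner_eq0 orbF.
  by rewrite ((pcharf0P F).1 hchar).
have twoU : two \is a GRing.unit by apply: hdiv.
pose t := two^-1.
have tw : two * t = 1 by rewrite mulrV.
have wt : t * two = 1 by rewrite mulVr.
have twC x : two * x = x * two by rewrite /two mulrDl mulrDr mul1r mulr1.
have tC x : t * x = x * t.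
  by rewrite -[LHS]mulr1 -tw mulrA -(mulrA t) -twC mulrA wt mul1r.
have tK : t \in K by apply: (hinv _ _ two_nz); by rewrite rpredD.
have st : s t = t.
  have s2 : s two = two by rewrite /two sD s1.
  have : s (t * two) = 1 by rewrite wt s1.
  by rewrite sM s2 => h; rewrite -(mulKr twoU (s t)) h mulr1.
have U := @Tunique _ _ K hinv hdiv hT1.
have ex : forall z : D, {a | a \in K /\ forall k, k \in K -> Tr (a * k) = Tr (z * k)}.
  move=> z; apply: constructive_indefinite_description.
  by case: (@Texists _ _ K hinv hdiv hT1 z) => a aK H; exists a.
pose f0 z := sval (ex z).
have f0K z : f0 z \in K by rewrite /f0; case: (svalP (ex z)).
have f0T z k : k \in K -> Tr (f0 z * k) = Tr (z * k).
  by rewrite /f0; case: (svalP (ex z)) => _; apply.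
have f0D x y : f0 (x + y) = f0 x + f0 y.
  apply: U; rewrite ?f0K ?rpredD ?f0K // => k kK.
  by rewrite f0T // !mulrDl !TrD !f0T.
have f01 : f0 1 = 1.
  by apply: U; rewrite ?f0K // => k kK; rewrite f0T.
have f0M k l z : k \in K -> l \in K -> f0 (k * z * l) = k * f0 z * l.
  move=> kK lK; apply: U; rewrite ?f0K ?memvM ?f0K // => k' k'K.
  rewrite f0T // -!mulrA (TrM k) (TrM k) -!mulrA [RHS]f0T //.
  by rewrite !memvM.
exists (fun z => (f0 z + s (f0 (s z))) * t); split.
- by move=> z /=; rewrite memvM ?rpredD ?f0K ?sK ?f0K.
- by rewrite /= s1 f01 s1.
- by move=> z /=; rewrite ss sM st sD ss tC addrC.
- move=> k l z kK lK.
  have e1 : s (k * z * l) = s l * s z * s k by rewrite !sM mulrA.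
  rewrite /= e1 !f0M ?sK // !sM !ss.
  rewrite -[RHS]mulrA -[_ * t * l]mulrA [t * l]tC !mulrA; congr (_ * _).
  by rewrite mulrDr mulrDl.
- by move=> x y /=; rewrite f0D sD f0D sD -mulrDl addrACA.
Qed.
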